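(* For real $x>0$ let \[ S(x)=\int_0^\infty\frac{2\arctan(t/x)}{e^{2\pi t}-1}\,dt. \] Let $p\in(1,\infty)\setminus\{2\}$ and $\frac1p+\frac1{p'}=1$. Then for every $k\in\mathbb N$, \[ S(k)-\frac1pS(kp/2)-\frac1{p'}S(kp'/2)<0, \] and $\lim_{k\to\infty}\left(S(k)-\frac1pS(kp/2)-\frac1{p'}S(kp'/2)\right)=0$. *)

(* Defs.v *)
From Stdlib Require Import Reals.
From Coquelicot Require Import Coquelicot.
Open Scope R_scope.

Definition S_integrand (x t : R) : R := 2 * atan (t / x) / (exp (2 * PI * t) - 1).

Definition S (x : R) : R :=
  RInt_gen (S_integrand x) (at_point 0) (Rbar_locally p_infty).

Definition Sdiff (p p' k : R) : R :=
  S k - (1 / p) * S (k * p / 2) - (1 / p') * S (k * p' / 2).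

(* Main.v *)
Require Import Defs.
From Stdlib Require Import Reals Lra.
From Coquelicot Require Import Coquelicot.
Open Scope R_scope.

Lemma is_RInt_atan' (b : R) :
  is_RInt (fun t => / (1 + t^2)) 0 b (atan b - atan 0).
Proof.
  apply (is_RInt_derive atan (fun t => / (1 + t^2))).
  - intros x _. apply is_derive_Reals. apply derivable_pt_lim_atan.
  - intros x _. apply continuous_Rinv_comp.
    + apply (ex_derive_continuous (fun t => 1 + t^2)). auto_derive. auto.
    + nra.
Qed.

Lemma improper (f : R -> R) (C : R) :
  0 <= C ->
  (forall b, 0 <= b -> ex_RInt f 0 b) ->
  (forall t, 0 < t -> 0 <= f t <= C * / (1 + t^2)) ->
  exists L, is_RInt_gen f (at_point 0) (Rbar_locally p_infty) L /\ 0 <= L <= C * (PI/2).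
Proof.
  intros HC Hex Hb.
  assert (Hmono : forall a b, 0 <= a <= b -> RInt f 0 a <= RInt f 0 b).
  { intros a b Hab.
    rewrite <- (RInt_Chasles f 0 a b).
    - assert (0 <= RInt f a b).
      { apply RInt_ge_0. lra. apply (ex_RInt_Chasles_2 f 0); [lra|]. apply Hex; lra.
        intros x Hx. apply Hb. lra. }
      change (plus (RInt f 0 a) (RInt f a b)) with (RInt f 0 a + RInt f a b). lra.
    - apply (ex_RInt_Chasles_1 f 0 a b); [lra|]. apply Hex; lra.
    - apply (ex_RInt_Chasles_2 f 0 a b); [lra|]. apply Hex; lra. }
  assert (Hbd : forall b, 0 <= b -> 0 <= RInt f 0 b <= C * (PI/2)).
  { intros b Hb0. split.
    - apply RInt_ge_0; auto. intros x Hx. apply Hb. lra.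
    - assert (Hi : is_RInt (fun t => C * / (1 + t^2)) 0 b (C * (atan b - atan 0))).
      { apply (is_RInt_scal (fun t => / (1 + t^2)) 0 b C). apply is_RInt_atan'. }
      apply Rle_trans with (C * (atan b - atan 0)).
      + rewrite <- (is_RInt_unique _ _ _ _ Hi).
        apply RInt_le; auto. eexists; eauto.
        intros x Hx. apply Hb. lra.
      + rewrite atan_0. destruct (atan_bound b). nra. }
  set (E := fun y => exists b, 0 <= b /\ y = RInt f 0 b).
  destruct (completeness E) as [L [HL1 HL2]].
  { exists (C * (PI/2)). intros y [b [Hb0 ->]]. apply Hbd; auto. }
  { exists (RInt f 0 0). exists 0. split; [lra|auto]. }
  exists L. split.
  - intros P [eps HP]. 
    assert (Hex2 : exists b0, 0 <= b0 /\ L - eps < RInt f 0 b0).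
    { destruct (Rlt_or_le (C*(PI/2)) 0) as [Hn|Hn].
      - exfalso. pose proof (Hbd 0 (Rle_refl 0)). lra.
      - apply Classical_Pred_Type.not_all_not_ex. intros Hno.
        assert (L <= L - eps).
        { apply HL2. intros y [b [Hb0 ->]]. specialize (Hno b). 
          apply Rnot_lt_le. intros Hlt. apply Hno. split; auto. }
        destruct eps as [e He]. simpl in *. lra. }
    destruct Hex2 as [b0 [Hb0 Hlt]].
    apply (Filter_prod _ _ _ (fun a => a = 0) (fun b => b0 < b)).
    + reflexivity.
    + exists b0. auto.
    + intros a b -> Hb1. simpl. exists (RInt f 0 b). split.
      * apply (RInt_correct f 0 b). apply Hex. lra.
      * apply HP. unfold ball; simpl; unfold AbsRing_ball, abs, minus, plus, opp; simpl.
        assert (RInt f 0 b0 <= RInt f 0 b) by (apply Hmono; lra).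
        assert (RInt f 0 b <= L) by (apply HL1; exists b; split; auto; lra).
        apply Rabs_lt_between'. destruct eps; simpl in *; lra.
  - split.
    + apply Rle_trans with (RInt f 0 0). apply Hbd; lra. apply HL1. exists 0; split; auto; lra.
    + apply HL2. intros y [b [Hb0 ->]]. apply Hbd; auto.
Qed.

Definition dq (h : R -> R) (l : R) (t : R) : R :=
  if Req_EM_T t 0 then l else h t / t.

Lemma dq_cont0 h l : h 0 = 0 -> derivable_pt_lim h 0 l -> continuous (dq h l) 0.
Proof.
  intros H0 Hd. apply continuity_pt_filterlim.
  intros eps Heps. destruct (Hd eps Heps) as [del Hdel].
  exists del. split; [apply cond_pos|].
  intros x [_ Hx]. unfold dist in *; simpl in *; unfold R_dist in *.
  unfold dq. destruct (Req_EM_T 0 0) as [_|C]; [|congruence].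
  destruct (Req_EM_T x 0) as [->|Hx0].
  - rewrite Rminus_diag, Rabs_R0; auto.
  - specialize (Hdel x Hx0). rewrite Rminus_0_r in Hx. specialize (Hdel Hx).
    rewrite Rplus_0_l, H0, Rminus_0_r in Hdel. exact Hdel.
Qed.

Lemma dq_cont h l t : t <> 0 -> continuous h t -> continuous (dq h l) t.
Proof.
  intros Ht Hc.
  apply (continuous_ext_loc _ (fun s => h s * / s)).
  - exists (mkposreal _ (Rabs_pos_lt t Ht)). intros y Hy.
    unfold dq. destruct (Req_EM_T y 0) as [->|]; [|reflexivity].
    exfalso. unfold ball in Hy; simpl in Hy; unfold AbsRing_ball, abs, minus, plus, opp in Hy; simpl in Hy.
    rewrite Rplus_0_l, Rabs_Ropp in Hy. lra.
  - apply (continuous_mult h (fun s => / s)); auto. apply continuous_Rinv; auto.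
Qed.

Lemma test x : x <> 0 -> is_derive (fun s => atan (s / x)) 0 (/ x).
Proof. intros. auto_derive. Abort.


Lemma exp_cubic y : 0 <= y -> y + y^3 / 27 <= exp y - 1.
Proof.
  intros Hy.
  assert (He : exp y = exp (y/3) * exp (y/3) * exp (y/3)).
  { rewrite <- !exp_plus. f_equal. field. }
  pose proof (exp_ineq1_le (y/3)).
  assert (0 <= 1 + y/3) by lra.
  assert ((1 + y/3) * (1+y/3) <= exp (y/3) * exp (y/3)) by (apply Rmult_le_compat; lra).
  assert ((1 + y/3) * (1+y/3) * (1 + y/3) <= exp (y/3) * exp (y/3) * exp(y/3)) by (apply Rmult_le_compat; nra).
  nra.
Qed.

Lemma atan_le_id s : 0 <= s -> atan s <= s.
Proof.
  intros Hs. destruct (Req_dec s 0) as [->|Hs0]. rewrite atan_0; lra.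
  destruct (MVT_cor2 (fun u => u - atan u) (fun u => 1 - / (1 + u^2)) 0 s) as [c [Hc1 Hc2]].
  - lra.
  - intros c _. apply derivable_pt_lim_minus. apply derivable_pt_lim_id. apply derivable_pt_lim_atan.
  - rewrite atan_0 in Hc1.
    assert (0 <= 1 - / (1 + c^2)).
    { assert (/ (1 + c^2) <= 1). { rewrite <- Rinv_1. apply Rinv_le_contravar; nra. } lra. }
    nra.
Qed.

Lemma atan_ge0 s : 0 <= s -> 0 <= atan s.
Proof.
  intros Hs. destruct (Req_dec s 0) as [->|Hs0]. rewrite atan_0; lra.
  rewrite <- atan_0. left. apply atan_increasing. lra.
Qed.

Definition gx (x : R) (t : R) : R :=
  2 * dq (fun s => atan (s / x)) (/ x) t * / dq (fun s => exp (2*PI*s) - 1) (2*PI) t.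

Lemma expm1_neq t : t <> 0 -> exp (2*PI*t) - 1 <> 0.
Proof.
  intros Ht He. assert (exp (2*PI*t) = exp 0) by (rewrite exp_0; lra).
  apply exp_inv in H. pose proof PI_RGT_0. nra.
Qed.

Lemma gx_cont x t : 0 < x -> continuous (gx x) t.
Proof.
  intros Hx. pose proof PI_RGT_0.
  assert (Hd2 : dq (fun s => exp (2*PI*s) - 1) (2*PI) t <> 0).
  { unfold dq. destruct (Req_EM_T t 0). lra.
    unfold Rdiv. apply Rmult_integral_contrapositive. split. apply expm1_neq; auto. apply Rinv_neq_0_compat; auto. }
  unfold gx.
  apply (continuous_mult (fun t => 2 * dq (fun s => atan (s / x)) (/ x) t)
          (fun t => / dq (fun s => exp (2*PI*s) - 1) (2*PI) t)).
  - apply (continuous_mult (fun _ => 2)). apply continuous_const.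
    destruct (Req_dec t 0) as [->|Ht].
    + apply dq_cont0. rewrite Rdiv_0_l, atan_0; auto.
      apply is_derive_Reals. auto_derive; auto. field. lra.
    + apply dq_cont; auto. apply (ex_derive_continuous (fun s => atan (s / x))). auto_derive. auto.
  - apply continuous_Rinv_comp; auto.
    destruct (Req_dec t 0) as [->|Ht].
    + apply dq_cont0. rewrite Rmult_0_r, exp_0; ring.
      apply is_derive_Reals. auto_derive; auto. rewrite Rmult_0_r, exp_0; ring.
    + apply dq_cont; auto. apply (ex_derive_continuous (fun s => exp (2*PI*s) - 1)). auto_derive. auto.
Qed.

Lemma gx_eq x t : 0 < x -> 0 < t -> gx x t = S_integrand x t.
Proof.
  intros Hx Ht. unfold gx, dq, S_integrand.
  destruct (Req_EM_T t 0). lra.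
  pose proof (expm1_neq t n). field. auto.
Qed.

Lemma Sint_bound x t : 0 < x -> 0 < t -> 0 <= S_integrand x t <= (2 / x) * / (1 + t^2).
Proof.
  intros Hx Ht. unfold S_integrand. pose proof PI2_3_2.
  pose proof (exp_cubic (2*PI*t)) as Hc.
  assert (Hpos : 0 <= 2 * PI * t) by nra.
  specialize (Hc Hpos).
  assert (Hs : 0 <= t / x) by (apply Rlt_le, Rdiv_lt_0_compat; auto).
  pose proof (atan_le_id _ Hs). pose proof (atan_ge0 _ Hs).
  set (E := exp (2*PI*t) - 1) in *. set (a := atan (t/x)) in *.
  assert (HE : t * (1 + t^2) <= E).
  { assert (t + t^3 <= 2 * PI * t + (2*PI*t)^3/27).
    { assert (HP3 : PI > 3) by lra. assert (H9 : PI*PI >= 9) by nra.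
      assert (H27 : PI^3 >= 27) by (simpl; nra).
      assert (t^3 * 8 * PI^3 / 27 >= t^3 * 8) by (assert (0 <= t^3) by (apply pow_le; lra); nra).
      replace ((2*PI*t)^3/27) with (t^3 * 8 * PI^3 / 27) by field.
      assert (0 <= t^3) by (apply pow_le; lra). nra. }
    lra. }
  assert (HE0 : 0 < E) by nra.
  split.
  - apply Rmult_le_pos. lra. apply Rlt_le, Rinv_0_lt_compat; auto.
  - unfold Rdiv. 
    apply Rle_trans with (2 * (t / x) * / E).
    + apply Rmult_le_compat_r. apply Rlt_le, Rinv_0_lt_compat; auto. lra.
    + replace (2 * (t/x) * / E) with ((2/x) * (t / E)) by (field; lra).
      apply Rmult_le_compat_l. apply Rlt_le, Rdiv_lt_0_compat; lra.
      apply (Rmult_le_reg_r (E * (1 + t^2))). nra.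
      replace (t / E * (E * (1 + t^2))) with (t * (1+t^2)) by (field; lra).
      replace (/ (1 + t^2) * (E * (1 + t^2))) with E by (field; nra). auto.
Qed.

Lemma Sint_ex x b : 0 < x -> 0 <= b -> ex_RInt (S_integrand x) 0 b.
Proof.
  intros Hx Hb. apply (ex_RInt_ext (gx x)).
  - intros t Ht. rewrite Rmin_left in Ht by lra. apply gx_eq; lra.
  - apply (ex_RInt_continuous (V:=R_CompleteNormedModule)). intros; apply gx_cont; auto.
Qed.

Lemma S_spec x : 0 < x ->
  is_RInt_gen (S_integrand x) (at_point 0) (Rbar_locally p_infty) (S x) /\ 0 <= S x <= (2/x) * (PI/2).
Proof.
  intros Hx.
  destruct (improper (S_integrand x) (2/x)) as [L [HL HLb]].
  - apply Rlt_le, Rdiv_lt_0_compat; lra.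
  - intros; apply Sint_ex; auto.
  - intros; apply Sint_bound; auto.
  - assert (S x = L). { unfold S. apply is_RInt_gen_unique. exact HL. }
    rewrite H. auto.
Qed.

Definition psi (t u : R) := u * atan (t * u).
Definition psi' (t u : R) := atan (t * u) + u * t / (1 + (t*u)^2).

Lemma psi_der t u : derivable_pt_lim (psi t) u (psi' t u).
Proof.
  apply is_derive_Reals. unfold psi, psi'. auto_derive; auto. field.
  nra.
Qed.

Lemma psi'_incr t a b : 0 < t -> a < b -> psi' t a < psi' t b.
Proof.
  intros Ht Hab.
  destruct (MVT_cor2 (psi' t) (fun u => 2 * t / (1 + (t*u)^2)^2) a b) as [c [Hc1 Hc2]]; auto.
  - intros c _. apply is_derive_Reals. unfold psi'. auto_derive.
    + nra.
    + field. nra.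
  - assert (0 < 2 * t / (1 + (t*c)^2)^2).
    { apply Rdiv_lt_0_compat. lra. apply pow_lt. nra. }
    nra.
Qed.

Lemma psi_conv_lt t u1 u2 : 0 < t -> u1 < u2 ->
  2 * psi t ((u1+u2)/2) < psi t u1 + psi t u2.
Proof.
  intros Ht H12. set (m := (u1+u2)/2).
  destruct (MVT_cor2 (psi t) (psi' t) u1 m) as [c1 [E1 H1]]. unfold m; lra.
  intros; apply psi_der.
  destruct (MVT_cor2 (psi t) (psi' t) m u2) as [c2 [E2 H2]]. unfold m; lra.
  intros; apply psi_der.
  assert (psi' t c1 < psi' t c2) by (apply psi'_incr; lra).
  assert (m - u1 = u2 - m) by (unfold m; field).
  assert (0 < m - u1) by (unfold m; lra).
  nra.
Qed.

Lemma psi_conv t u1 u2 : 0 < t -> u1 <> u2 ->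
  2 * psi t ((u1+u2)/2) < psi t u1 + psi t u2.
Proof.
  intros Ht H. destruct (Rlt_or_le u1 u2).
  - apply psi_conv_lt; auto.
  - replace ((u1+u2)/2) with ((u2+u1)/2) by field. rewrite (Rplus_comm (psi t u1)). apply psi_conv_lt; auto.
    destruct H0 as [H0|H0]; [exact H0|]. exfalso; apply H; symmetry; exact H0.
Qed.

Lemma D_neg p p' k t : 1 < p -> 1 < p' -> p <> 2 -> 1/p + 1/p' = 1 -> 0 < k -> 0 < t ->
  S_integrand k t - (1/p) * S_integrand (k*p/2) t - (1/p') * S_integrand (k*p'/2) t < 0.
Proof.
  intros Hp Hp' Hp2 Hc Hk Ht.
  unfold S_integrand.
  set (E := exp (2*PI*t) - 1).
  assert (HE : 0 < E).
  { unfold E. pose proof (exp_ineq1 (2*PI*t)). pose proof PI_RGT_0.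
    assert (0 < 2*PI*t) by nra. assert (2*PI*t <> 0) by lra. specialize (H H2). lra. }
  set (u1 := 2/(k*p)). set (u2 := 2/(k*p')).
  assert (Hm : (u1+u2)/2 = /k).
  { unfold u1, u2. replace (/k) with (/k * (1/p + 1/p')) by (rewrite Hc; ring). field. lra. }
  assert (Hu : u1 <> u2).
  { unfold u1, u2. intros Heq. 
    assert (Hq : 2/(k*p) * (k*p*p') = 2/(k*p') * (k*p*p')) by (rewrite Heq; reflexivity).
    replace (2/(k*p) * (k*p*p')) with (2*p') in Hq by (field; lra).
    replace (2/(k*p') * (k*p*p')) with (2*p) in Hq by (field; lra).
    assert (p = p') by lra.
    subst p'. apply Hp2. replace (1/p+1/p) with (2/p) in Hc by (field; lra).
    assert (Hq2 : 2/p * p = 1 * p) by (rewrite Hc; reflexivity).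
    replace (2/p*p) with 2 in Hq2 by (field; lra). lra. }
  pose proof (psi_conv t u1 u2 Ht Hu) as Hcv. rewrite Hm in Hcv. unfold psi in Hcv.
  replace (t / (k*p/2)) with (t*u1) by (unfold u1; field; lra).
  replace (t / (k*p'/2)) with (t*u2) by (unfold u2; field; lra).
  replace (t / k) with (t * / k) by reflexivity.
  replace (1/p) with (k * u1 / 2) by (unfold u1; field; lra).
  replace (1/p') with (k * u2 / 2) by (unfold u2; field; lra).
  apply (Rmult_lt_reg_r (E / k)). apply Rdiv_lt_0_compat; lra.
  rewrite Rmult_0_l.
  replace ((2 * atan (t * / k) / E - k * u1 / 2 * (2 * atan (t * u1) / E) -
    k * u2 / 2 * (2 * atan (t * u2) / E)) * (E / k)) with
    (2 * (/ k * atan (t * / k)) - (u1 * atan (t * u1) + u2 * atan (t * u2))) by (field; lra).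
  lra.
Qed.

Lemma conj_gt1 p p' : 1 < p -> 1/p + 1/p' = 1 -> 1 < p'.
Proof.
  intros Hp Hc.
  assert (H1 : 0 < 1/p < 1).
  { split. apply Rdiv_lt_0_compat; lra.
    apply (Rmult_lt_reg_r p). lra. field_simplify; lra. }
  assert (H2 : 0 < 1/p' < 1) by lra.
  destruct (Rlt_or_le 0 p') as [Hp'|Hp'].
  - destruct (Rlt_or_le 1 p') as [|Hle]; auto.
    exfalso. assert (1 <= 1/p'). 
    { apply (Rmult_le_reg_r p'); auto. field_simplify; lra. }
    lra.
  - exfalso. destruct Hp' as [Hn|He].
    + assert (1/p' < 0). { unfold Rdiv. rewrite Rmult_1_l. apply Rinv_lt_0_compat; auto. }
      lra.
    + subst. unfold Rdiv in H2. rewrite Rinv_0 in H2. lra.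
Qed.

Definition Dfun (p p' x : R) (t : R) : R :=
  S_integrand x t - (1/p) * S_integrand (x*p/2) t - (1/p') * S_integrand (x*p'/2) t.

Lemma Sdiff_neg p p' x : 1 < p -> 1 < p' -> p <> 2 -> 1/p + 1/p' = 1 -> 0 < x ->
  Sdiff p p' x < 0.
Proof.
  intros Hp Hp' Hp2 Hc Hx.
  assert (Ha : 0 < x*p/2) by nra. assert (Hb : 0 < x*p'/2) by nra.
  destruct (S_spec x Hx) as [I1 _]. destruct (S_spec _ Ha) as [I2 _]. destruct (S_spec _ Hb) as [I3 _].
  assert (HD : is_RInt_gen (Dfun p p' x) (at_point 0) (Rbar_locally p_infty) (Sdiff p p' x)).
  { apply (is_RInt_gen_minus _ _ _ _ (is_RInt_gen_minus _ _ _ _ I1 (is_RInt_gen_scal _ (1/p) _ I2)) (is_RInt_gen_scal _ (1/p') _ I3)). }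
  assert (Hex : ex_RInt (Dfun p p' x) 0 1).
  { apply (ex_RInt_minus (V:=R_NormedModule) (fun t => S_integrand x t - (1/p) * S_integrand (x*p/2) t)).
    apply (ex_RInt_minus (V:=R_NormedModule)). apply Sint_ex; lra.
    apply (ex_RInt_scal (V:=R_NormedModule)). apply Sint_ex; lra.
    apply (ex_RInt_scal (V:=R_NormedModule)). apply Sint_ex; lra. }
  set (J := RInt (Dfun p p' x) 0 1).
  assert (HJ : J < 0).
  { set (G := fun t => gx x t - (1/p) * gx (x*p/2) t - (1/p') * gx (x*p'/2) t).
    assert (J = RInt G 0 1).
    { apply RInt_ext. intros t Ht. rewrite Rmin_left, Rmax_right in Ht by lra.
      unfold Dfun, G. rewrite !gx_eq; auto; lra. }
    rewrite H.
    replace 0 with (RInt (fun _ => 0) 0 1) at 2.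
    2:{ rewrite RInt_const. apply Rmult_0_r. }
    apply RInt_lt. lra.
    - intros; apply continuous_const.
    - intros t _. unfold G.
      apply (continuous_minus (fun t => gx x t - 1 / p * gx (x * p / 2) t)).
      apply (continuous_minus (gx x)). apply gx_cont; auto.
      apply (continuous_scal_r (1/p) (gx (x*p/2))). apply gx_cont; auto.
      apply (continuous_scal_r (1/p') (gx (x*p'/2))). apply gx_cont; auto.
    - intros t Ht. unfold G. rewrite !gx_eq; try lra. apply D_neg; auto; lra. }
  assert (H01 : is_RInt_gen (Dfun p p' x) (at_point 0) (at_point 1) J).
  { apply is_RInt_gen_at_point. apply (RInt_correct (V:=R_CompleteNormedModule)). exact Hex. }
  pose proof (is_RInt_gen_Chasles _ _ _ _ (is_RInt_gen_swap _ _ H01) HD) as H1inf.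
  pose proof (is_RInt_gen_scal _ 0 _ H1inf) as Hz.
  pose proof (is_RInt_gen_opp _ _ H1inf) as Ho.
  assert (F1 : filter_prod (at_point 1) (Rbar_locally p_infty) (fun ab : R * R => fst ab <= snd ab)).
  { apply (Filter_prod _ _ _ (fun a => a = 1) (fun b => 1 < b)). reflexivity. exists 1; auto.
    intros a b -> Hb1. simpl. lra. }
  assert (F2 : filter_prod (at_point 1) (Rbar_locally p_infty) (fun ab : R * R =>
     forall t, fst ab <= t /\ t <= snd ab -> norm (scal 0 (Dfun p p' x t)) <= opp (Dfun p p' x t))).
  { apply (Filter_prod _ _ _ (fun a => a = 1) (fun b => 1 < b)). reflexivity. exists 1; auto.
    intros a b -> Hb1 t Ht. simpl in Ht.
    change (scal 0 (Dfun p p' x t)) with (0 * Dfun p p' x t).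
    rewrite Rmult_0_l. change (norm 0) with (Rabs 0). rewrite Rabs_R0.
    change (opp (Dfun p p' x t)) with (- Dfun p p' x t).
    assert (Dfun p p' x t < 0) by (apply D_neg; auto; lra). lra. }
  pose proof (RInt_gen_norm _ _ _ _ F1 F2 Hz Ho) as Hfin.
  change (norm (scal 0 (plus (opp J) (Sdiff p p' x)))) with (Rabs (0 * (- J + Sdiff p p' x))) in Hfin.
  change (opp (plus (opp J) (Sdiff p p' x))) with (- (- J + Sdiff p p' x)) in Hfin.
  rewrite Rmult_0_l, Rabs_R0 in Hfin. lra.
Qed.

Lemma Sdiff_lb p p' x : 1 < p -> 1 < p' -> 1/p + 1/p' = 1 -> 0 < x ->
  -4 * PI * / x <= Sdiff p p' x.
Proof.
  intros Hp Hp' Hc Hx.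
  assert (Ha : 0 < x*p/2) by nra. assert (Hb : 0 < x*p'/2) by nra.
  destruct (S_spec x Hx) as [_ B1]. destruct (S_spec _ Ha) as [_ B2]. destruct (S_spec _ Hb) as [_ B3].
  assert (Hq : 0 < 1/p < 1) by (split; [apply Rdiv_lt_0_compat; lra| apply (Rmult_lt_reg_r p); [lra|field_simplify; lra]]).
  assert (Hq' : 0 < 1/p' < 1) by lra.
  assert (E2 : 2 / (x*p/2) * (PI/2) <= 2 * PI * / x).
  { replace (2 / (x*p/2) * (PI/2)) with ((2 * PI * / x) * (1/p)) by (field; lra).
    assert (0 < 2*PI*/x) by (pose proof PI_RGT_0; assert (0 < /x) by (apply Rinv_0_lt_compat; lra); nra).
    nra. }
  assert (E3 : 2 / (x*p'/2) * (PI/2) <= 2 * PI * / x).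
  { replace (2 / (x*p'/2) * (PI/2)) with ((2 * PI * / x) * (1/p')) by (field; lra).
    assert (0 < 2*PI*/x) by (pose proof PI_RGT_0; assert (0 < /x) by (apply Rinv_0_lt_compat; lra); nra).
    nra. }
  unfold Sdiff. nra.
Qed.

Theorem proposition3p1 (p p' : R) (hp : 1 < p) (hp2 : p <> 2)
  (hconj : 1 / p + 1 / p' = 1) :
  (forall k : nat, (1 <= k)%nat -> Sdiff p p' (INR k) < 0) /\
  is_lim_seq (fun k : nat => Sdiff p p' (INR k)) 0.
Proof.
  pose proof (conj_gt1 p p' hp hconj) as hp'.
  assert (Hpos : forall k : nat, (1 <= k)%nat -> 0 < INR k).
  { intros k Hk. apply lt_0_INR. apply (proj1 (Nat.le_succ_l 0 k)). exact Hk. }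
  split.
  - intros k Hk. apply Sdiff_neg; auto.
  - apply (is_lim_seq_le_le_loc (fun k => -4 * PI * / INR k) _ (fun _ => 0)).
    + exists 1%nat. intros n Hn. split.
      * apply Sdiff_lb; auto.
      * left. apply Sdiff_neg; auto.
    + replace (Finite 0) with (Rbar_mult (-4*PI) (Rbar_inv p_infty)).
      apply (is_lim_seq_scal_l (fun n => / INR n)).
      apply is_lim_seq_inv. apply is_lim_seq_INR. discriminate.
      simpl. f_equal. ring.
    + apply is_lim_seq_const.
Qed.
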